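(* Let $G$ be a finite simple graph and let $\tau,\tau'$ be two threshold assignments for the vertices of $G$ with $\overline{\tau}=\overline{\tau'}$. Let $r$ be an integer with $dyn_{\tau}(G)\leq r\leq dyn_{\tau'}(G)$. Then there exists a threshold assignment $\tau''$ with $\overline{\tau''}=\overline{\tau}$ such that $dyn_{\tau''}(G)=r$.
   Context: A threshold assignment is a function $\tau:V(G)\to\{0,1,2,\dots\}$; its average is $\overline{\tau}=\sum_{v\in V(G)}\tau(v)/|V(G)|$. A set $D\subseteq V(G)$ is a $\tau$-dynamic monopoly ($\tau$-dynamo) if for some $k\ge 0$ the vertex set can be partitioned into $D_0=D, D_1,\dots,D_k$ where for each $1\le i\le k$, $D_i$ consists of all vertices (outside $D_0\cup\dots\cup D_{i-1}$) having at least $\tau(v)$ neighbors in $D_0\cup\dots\cup D_{i-1}$. $dyn_\tau(G)$ denotes the minimum size of a $\tau$-dynamo of $G$. *)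

(* Defs.v *)
From HB Require Import structures.
From mathcomp Require Import all_boot all_order all_algebra.
Set Implicit Arguments. Unset Strict Implicit. Unset Printing Implicit Defensive.
Import Order.TTheory GRing.Theory Num.Theory.

Definition simple_graph (T : finType) (e : rel T) : Prop :=
  symmetric e /\ irreflexive e.

Definition avg_threshold (T : finType) (tau : T -> nat) : rat :=
  ((\sum_(v : T) tau v)%:R / #|T|%:R)%R.

Definition nbrs_in (T : finType) (e : rel T) (S : {set T}) (v : T) : nat :=
  #|[set u in S | e v u]|.

(* one round: D_0 u ... u D_{i-1}  |->  D_0 u ... u D_i, where D_i is the set of
   vertices outside the current union having >= tau v neighbours in it *)
Definition dyn_step (T : finType) (e : rel T) (tau : T -> nat) (S : {set T})
  : {set T} :=
  S :|: [set v | (v \notin S) && (tau v <= nbrs_in e S v)].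

Definition is_dynamo (T : finType) (e : rel T) (tau : T -> nat) (D : {set T})
  : Prop :=
  exists k : nat, iter k (dyn_step e tau) D = [set: T].

(* dyn_tau(G) = r : r is the minimum size of a tau-dynamo *)
Definition dyn_eq (T : finType) (e : rel T) (tau : T -> nat) (r : nat) : Prop :=
  (exists D : {set T}, is_dynamo e tau D /\ #|D| = r) /\
  (forall D : {set T}, is_dynamo e tau D -> r <= #|D|).

(* Main.v *)
Require Import Defs.
From mathcomp Require Import all_boot all_order all_algebra.
From Stdlib Require Import Classical Lia.
From mathcomp Require Import zify.

Section S.
Variables (T : finType) (e : rel T).

Lemma step_ext tau (S : {set T}) : S \subset dyn_step e tau S.
Proof. by apply/subsetP => x xS; rewrite inE xS. Qed.

Lemma iter_ext tau (S : {set T}) k : S \subset iter k (dyn_step e tau) S.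
Proof.
elim: k => [|k IH] /=; first exact: subxx.
exact: subset_trans IH (step_ext _ _).
Qed.

Lemma step_mono tau sigma (S S' : {set T}) : S \subset S' ->
  (forall u, u \notin S' -> sigma u <= tau u) ->
  dyn_step e tau S \subset dyn_step e sigma S'.
Proof.
move=> sub H; apply/subsetP => x; rewrite !inE => /orP [xS | /andP [xnS le]].
  by rewrite (subsetP sub).
case xS': (x \in S') => //=.
apply: leq_trans (H x _) _; first by rewrite xS'.
apply: leq_trans le _; apply: subset_leq_card; apply/subsetP => y.
by rewrite !inE => /andP[yS ->]; rewrite (subsetP sub) .
Qed.

Lemma iter_mono tau sigma (S S' : {set T}) k : S \subset S' ->
  (forall u, u \notin S' -> sigma u <= tau u) ->
  iter k (dyn_step e tau) S \subset iter k (dyn_step e sigma) S'.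
Proof.
move=> sub H; elim: k => [|k IH] //=.
apply: step_mono => // u uN; apply: H; apply: contra uN.
by move=> uS; rewrite (subsetP (iter_ext _ _ _)).
Qed.

Lemma dynamo_mono tau sigma (D D' : {set T}) : D \subset D' ->
  (forall u, u \notin D' -> sigma u <= tau u) ->
  is_dynamo e tau D -> is_dynamo e sigma D'.
Proof.
move=> sub H [k Hk]; exists k; apply/eqP; rewrite eqEsubset subsetT /=.
by rewrite -Hk; apply: iter_mono.
Qed.

Lemma dyn_exists tau : exists m, dyn_eq e tau m.
Proof.
suff: forall n D, is_dynamo e tau D -> #|D| <= n -> exists m, dyn_eq e tau m.
  by move/(_ #|[set: T]| [set: T]); apply => //; exists 0.
elim=> [|n IH] D HD Hc.
  exists #|D|; split; first by exists D.
  by move=> D' _; apply: leq_trans Hc _.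
case: (classic (exists D', is_dynamo e tau D' /\ #|D'| <= n)).
  by move=> [D' [H1 H2]]; exact: IH H1 H2.
move=> Hn; exists #|D|; split; first by exists D.
move=> D' HD'; apply: leq_trans Hc _; rewrite ltnNge; apply/negP => Hle.
by apply: Hn; exists D'.
Qed.

Lemma dyn_le tau sigma d1 d2 : (forall u, sigma u <= tau u) ->
  dyn_eq e tau d1 -> dyn_eq e sigma d2 -> d2 <= d1.
Proof.
move=> H [[D [HD <-]] _] [_ H2]; apply: H2.
exact: dynamo_mono (subxx _) (fun u _ => H u) HD.
Qed.

Lemma dyn_le1 tau sigma v d1 d2 : (forall u, u != v -> sigma u <= tau u) ->
  dyn_eq e tau d1 -> dyn_eq e sigma d2 -> d2 <= d1.+1.
Proof.
move=> H [[D [HD <-]] _] [_ H2].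
apply: leq_trans (H2 (v |: D) _) _.
  apply: dynamo_mono HD; first exact: subsetUr.
  move=> u; rewrite !inE negb_or => /andP[uv _]; exact: H.
by rewrite cardsU1; case: (v \in D).
Qed.

Definition sumt (f : T -> nat) := \sum_(v : T) f v.

Lemma sum_two (F G : T -> nat) u w : u != w ->
  (forall x, x != u -> x != w -> F x = G x) ->
  sumt F + G u + G w = sumt G + F u + F w.
Proof.
move=> uw H.
have E : forall K : T -> nat, sumt K = K u + K w + \sum_(i | (i != u) && (i != w)) K i.
  move=> K; rewrite /sumt (bigD1 u) // (bigD1 w) /=; last by rewrite eq_sym.
  rewrite addnA; congr (_ + _); apply: eq_bigl => i; by rewrite andbT.
rewrite (E F) (E G) (eq_bigr G); first by lia.
by move=> i /andP[iu iw]; apply: H.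
Qed.

Lemma sum_le_eq (f g : T -> nat) : (forall v, f v <= g v) -> sumt f = sumt g ->
  forall v, f v = g v.
Proof.
move=> H Hs v.
have E : sumt g = sumt f + sumt (fun i => g i - f i).
  by rewrite /sumt -big_split; apply: eq_bigr => i _ /=; rewrite subnKC.
have : sumt (fun i => g i - f i) == 0 by rewrite -(eqn_add2l (sumt f)) -E Hs addn0.
move/eqP: (H v); rewrite /sumt sum_nat_eq0 => Hv /forallP /(_ v) /= /eqP; lia.
Qed.

Definition excess (tau tau' : T -> nat) := sumt (fun v => tau v - tau' v).

Lemma main_ind (tau' : T -> nat) (d' r : nat) : dyn_eq e tau' d' -> r <= d' ->
  forall n tau d, excess tau tau' <= n -> sumt tau = sumt tau' ->
  dyn_eq e tau d -> d <= r ->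
  exists tau'', sumt tau'' = sumt tau' /\ dyn_eq e tau'' r.
Proof.
move=> Hd' rd'; elim=> [|n IH] tau d Hex Hs Hd dr.
-
  have Hle : forall v, tau v <= tau' v.
    move=> v; rewrite -subn_eq0.
    move: Hex; rewrite leqn0 /excess /sumt sum_nat_eq0 => /forallP /(_ v); exact.
  have Heq := sum_le_eq _ _ Hle Hs.
  have := @dyn_le tau tau' d d' (fun u => eq_leq (esym (Heq u))) Hd Hd' => d'd.
  by exists tau; split => //; have -> : r = d by apply/eqP; rewrite eqn_leq dr (leq_trans rd' d'd).
case: (leqP r d) => [rd | dltr].
  have -> : r = d by apply/eqP; rewrite eqn_leq rd dr.
  by exists tau.
case: (classic (exists u, tau' u < tau u)) => [[u Hu]|Hn].
  have [w Hw] : exists w, tau w < tau' w.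
    apply: NNPP => Hn.
    have Hle : forall v, tau' v <= tau v.
      by move=> v; rewrite leqNgt; apply/negP => H; apply: Hn; exists v.
    have := sum_le_eq _ _ Hle (esym Hs) u; lia.
  have uw : u != w by apply/eqP => Huw; subst; lia.
  pose tau1 := fun x => if x == u then (tau u).-1 else if x == w then (tau w).+1 else tau x.
  have Fo : forall x, x != u -> x != w -> tau1 x = tau x.
    by move=> x /negbTE xu /negbTE xw; rewrite /tau1 xu xw.
  have t1u : tau1 u = (tau u).-1 by rewrite /tau1 eqxx.
  have t1w : tau1 w = (tau w).+1 by rewrite /tau1 eq_sym (negbTE uw) eqxx.
  have Hs1 : sumt tau1 = sumt tau' by have := @sum_two tau1 tau u w uw Fo; rewrite t1u t1w; lia.
  have Hex1 : excess tau1 tau' <= n.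
    have := @sum_two (fun v => tau1 v - tau' v) (fun v => tau v - tau' v) u w uw
      (fun x xu xw => congr1 (subn^~ _) (Fo x xu xw)).
    rewrite /excess /= t1u t1w in Hex *; lia.
  have [d1 Hd1] := dyn_exists tau1.
  have Hle1 : forall x, x != w -> tau1 x <= tau x.
    move=> x xw.
    by case: (eqVneq x u) => [->|xu]; [rewrite t1u leq_pred | rewrite Fo].
  have d1le := @dyn_le1 tau tau1 w d d1 Hle1 Hd Hd1.
  apply: (IH tau1 d1) => //.
  exact: leq_trans d1le dltr.
have Hle : forall v, tau v <= tau' v.
  by move=> v; rewrite leqNgt; apply/negP => H; apply: Hn; exists v.
have Heq := sum_le_eq _ _ Hle Hs.
have := @dyn_le tau tau' d d' (fun u => eq_leq (esym (Heq u))) Hd Hd' => d'd.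
exists tau; split => //; have -> : r = d by apply/eqP; rewrite eqn_leq dr (leq_trans rd' d'd).
done.
Qed.

End S.
Arguments sumt {T}.
Arguments main_ind {T e tau' d' r}.

Lemma avg_sum (T : finType) (f g : T -> nat) :
  avg_threshold f = avg_threshold g -> sumt f = sumt g.
Proof.
rewrite /avg_threshold /sumt => H.
case: (posnP #|T|) => [T0 | Tpos].
  have Hn : forall i : T, False.
    by move=> i; have := card0_eq T0 i; rewrite !inE.
  by rewrite !big1 // => i; case: (Hn i).
have nz : (#|T|%:R != 0 :> rat)%R by rewrite Num.Theory.pnatr_eq0 -lt0n.
have := GRing.divIf nz H.
by move/eqP; rewrite Num.Theory.eqr_nat => /eqP.
Qed.

Theorem proposition1 (T : finType) (e : rel T) (tau tau' : T -> nat)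
  (d d' r : nat) :
  simple_graph e ->
  avg_threshold tau = avg_threshold tau' ->
  dyn_eq e tau d -> dyn_eq e tau' d' ->
  d <= r <= d' ->
  exists tau'' : T -> nat,
    avg_threshold tau'' = avg_threshold tau /\ dyn_eq e tau'' r.
Proof.
move=> _ Havg Hd Hd' /andP[dr rd'].
have [tau'' [Hs H'']] := main_ind Hd' rd' _ _ _ (leqnn _) (avg_sum _ _ _ Havg) Hd dr.
exists tau''; split => //.
by rewrite /avg_threshold; have := Hs; rewrite /sumt => ->; have := avg_sum _ _ _ Havg; rewrite /sumt => ->.
Qed.
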